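(* In the comparison model (where letters can be accessed only through comparisons), every algorithm solving the witness s-cover testing problem requires $\Omega(n\log n)$ comparisons in the worst case on inputs where $S$ has length $n$.
   Context: For words $C,S$, $C$ is an \emph{s-cover} of $S$ if for every position $i$ of $S$ there exist indices $j_0<\dots<j_{|C|-1}$ with $S[j_t]=C[t]$ for all $t$ and $i\in\{j_0,\dots,j_{|C|-1}\}$. The \emph{witness s-cover testing problem}: given words $C$ and $S$, decide whether $C$ is an s-cover of $S$, and if so, output for every position $i$ of $S$ a position $j$ of $C$ such that some occurrence $j_0<\dots<j_{|C|-1}$ of $C$ as a subsequence of $S$ has $j_j=i$ (any such $j$ may be output). *)

(* Defs.v *)
From mathcomp Require Import all_boot.
Set Implicit Arguments. Unset Strict Implicit. Unset Printing Implicit Defensive.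

(* Words are sequences of letters; the alphabet is (ordered) nat.
   Positions are 0-based. *)

Definition occurrence (C S js : seq nat) : Prop :=
  [/\ size js = size C,
      sorted ltn js,
      all (fun j => j < size S) js &
      forall t, t < size C -> nth 0 S (nth 0 js t) = nth 0 C t].

Definition s_cover (C S : seq nat) : Prop :=
  forall i, i < size S -> exists js, occurrence C S js /\ i \in js.

Definition valid_witness (C S W : seq nat) : Prop :=
  size W = size S /\
  forall i, i < size S ->
    nth 0 W i < size C /\
    exists js, occurrence C S js /\ nth 0 js (nth 0 W i) = i.

(* Comparison model: a ternary comparison decision tree over an input of
   k letters (the word C ++ S).  A leaf outputs the answer:
   None = "not an s-cover", Some W = "s-cover, with witness W". *)
Inductive dtree (k : nat) : Type :=
| Leaf of option (seq nat)
| Node of 'I_k & 'I_k & dtree k & dtree k & dtree k.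

Fixpoint eval_dtree (k : nat) (T : dtree k) (w : seq nat) : option (seq nat) :=
  match T with
  | Leaf o => o
  | Node i j Tlt Teq Tgt =>
      let a := nth 0 w i in
      let b := nth 0 w j in
      if a < b then eval_dtree Tlt w
      else if a == b then eval_dtree Teq w
      else eval_dtree Tgt w
  end.

Fixpoint depth (k : nat) (T : dtree k) : nat :=
  match T with
  | Leaf _ => 0
  | Node _ _ T1 T2 T3 => (maxn (depth T1) (maxn (depth T2) (depth T3))).+1
  end.

Definition solves_witness_scover (m n : nat) (T : dtree (m + n)) : Prop :=
  forall C S : seq nat, size C = m -> size S = n ->
    match eval_dtree T (C ++ S) with
    | None => ~ s_cover C S
    | Some W => s_cover C S /\ valid_witness C S W
    end.

(* Main.v *)
Require Import Defs.
From mathcomp Require Import all_boot.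
From mathcomp Require Import zify.
Set Implicit Arguments. Unset Strict Implicit. Unset Printing Implicit Defensive.

Fixpoint leaves (K : nat) (T : dtree K) : seq (option (seq nat)) :=
  match T with
  | Leaf o => [:: o]
  | Node _ _ T1 T2 T3 => leaves T1 ++ leaves T2 ++ leaves T3
  end.

Lemma size_leaves K (T : dtree K) : size (leaves T) <= 3 ^ depth T.
Proof.
elim: T => [o|i j T1 IH1 T2 IH2 T3 IH3] /=; first by [].
rewrite !size_cat expnS.
set d := maxn _ _.
have h1 : 3 ^ depth T1 <= 3 ^ d by rewrite leq_exp2l // leq_maxl.
have h2 : 3 ^ depth T2 <= 3 ^ d.
  by rewrite leq_exp2l // /d (leq_trans (leq_maxl _ (depth T3))) // leq_maxr.
have h3 : 3 ^ depth T3 <= 3 ^ d.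
  by rewrite leq_exp2l // /d (leq_trans (leq_maxr (depth T2) _)) // leq_maxr.
lia.
Qed.

Lemma eval_in_leaves K (T : dtree K) w : eval_dtree T w \in leaves T.
Proof.
elim: T => [o|i j T1 IH1 T2 IH2 T3 IH3] /=; first by rewrite inE.
rewrite !mem_cat.
by case: ifP => _; [rewrite IH1 | case: ifP => _; [rewrite IH2 orbT | rewrite IH3 !orbT]].
Qed.

Section Fam.
Variables (k L : nat) (M : seq nat).
Hypothesis (sM : size M = L) (aM : all (fun x => x < k) M).
Definition Sw := iota 0 k ++ M ++ iota 0 k.

Lemma size_Sw : size Sw = 2 * k + L.
Proof. rewrite /Sw !size_cat !size_iota sM; lia. Qed.

Lemma Sw_lo t : t < k -> nth 0 Sw t = t.
Proof. move=> h; rewrite /Sw nth_cat size_iota h nth_iota //. Qed.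

Lemma Sw_hi t : t < k -> nth 0 Sw (k + L + t) = t.
Proof.
move=> h; rewrite /Sw nth_cat size_iota ifF; last lia.
rewrite nth_cat sM ifF; last lia.
rewrite nth_iota; last lia. lia.
Qed.

Lemma Sw_mid j : j < L -> nth 0 Sw (k + j) = nth 0 M j.
Proof.
move=> h; rewrite /Sw nth_cat size_iota ifF; last lia.
rewrite nth_cat sM ifT; last lia. congr nth; lia.
Qed.

Lemma Sw_val i : i < 2 * k + L ->
  let v := nth 0 Sw i in [/\ v < k, v <= i & i <= k + L + v].
Proof.
move=> hi /=.
case: (ltnP i k) => h1; first by rewrite Sw_lo //; split => //; lia.
case: (ltnP i (k + L)) => h2.
  have -> : i = k + (i - k) by lia.
  rewrite Sw_mid; last lia.
  have : nth 0 M (i - k) < k.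
    by apply: (allP aM); apply: mem_nth; rewrite sM; lia.
  move=> hv; split => //; lia.
have -> : i = k + L + (i - k - L) by lia.
rewrite Sw_hi; last lia. split; lia.
Qed.

Lemma Sw_cover : s_cover (iota 0 k) Sw.
Proof.
move=> i; rewrite size_Sw => hi.
have [hv1 hv2 hv3] := Sw_val hi.
set v := nth 0 Sw i in hv1 hv2 hv3.
pose f t := if t < v then t else if t == v then i else k + L + t.
exists (map f (iota 0 k)); split; last first.
  apply/mapP; exists v; first by rewrite mem_iota; lia.
  by rewrite /f ltnn eqxx.
split.
- by rewrite size_map !size_iota.
- apply: homo_sorted; last exact: iota_ltn_sorted.
  move=> x y /= hxy; rewrite /f.
  case: (ltnP x v) => a; case: (ltnP y v) => b //; try (case: eqP => c); try (case: eqP => e); lia.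
- apply/allP => j /mapP [t]; rewrite mem_iota size_Sw => ht ->; rewrite /f.
  case: ifP => a; first lia. case: ifP => b; lia.
- move=> t; rewrite size_iota => ht.
  rewrite (nth_map 0); last by rewrite size_iota.
  rewrite nth_iota // add0n /f.
  case: ifP => a; first by rewrite Sw_lo.
  case: eqP => b; first by rewrite b.
  by rewrite Sw_hi.
Qed.

Lemma Sw_witness W : valid_witness (iota 0 k) Sw W ->
  forall j, j < L -> nth 0 W (k + j) = nth 0 M j.
Proof.
move=> [_ hW] j hj.
have hi : k + j < size Sw by rewrite size_Sw; lia.
have [hw [js [[_ _ _ hocc] hjs]]] := hW _ hi.
have := hocc _ hw.
move: hw; rewrite size_iota => hw.
by rewrite hjs nth_iota // add0n Sw_mid.
Qed.

End Fam.

Theorem mainTheorem14 :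
  exists c N : nat, 0 < c /\
    forall n : nat, N <= n ->
    forall A : forall m : nat, dtree (m + n),
      (forall m : nat, solves_witness_scover (A m)) ->
      exists m : nat, n * trunc_log 2 n <= c * depth (A m).
Proof.
exists 8; exists 16; split; first by []. move=> n hn A hA.
set t := trunc_log 2 n.
have ht4 : 4 <= t by rewrite /t -(trunc_expnK 4 (erefl : 1 < 2)) leq_trunc_log.
have hpt : 2 ^ t <= n by apply: trunc_logP; lia.
set k := 2 ^ (t - 2).
have hk : 4 * k <= n.
  rewrite /k (_ : 4 = 2 ^ 2) // -expnD subnKC //; lia.
have hk0 : 0 < k by rewrite /k expn_gt0.
set L := n - 2 * k.
exists k.
set T := A k.
pose FT := {ffun 'I_L -> 'I_k}.
pose Mf (f : FT) := [seq val (f j) | j <- enum 'I_L].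
have sMf f : size (Mf f) = L by rewrite size_map size_enum_ord.
have aMf f : all (fun x => x < k) (Mf f).
  by apply/allP => x /mapP [j _ ->]; apply: ltn_ord.
have nMf f (j : 'I_L) : nth 0 (Mf f) j = val (f j).
  by rewrite (nth_map j) ?size_enum_ord // nth_ord_enum.
pose g (f : FT) := eval_dtree T (iota 0 k ++ Sw k (Mf f)).
have hsz f : size (Sw k (Mf f)) = n by rewrite (size_Sw (sMf f) (aMf f)) /L; lia.
have gW f : exists W, g f = Some W /\ valid_witness (iota 0 k) (Sw k (Mf f)) W.
  have := hA k (iota 0 k) (Sw k (Mf f)) (size_iota _ _) (hsz f).
  rewrite -/T -/(g f); case: (g f) => [W|].
    by move=> [_ hv]; exists W.
  by move=> h; exfalso; apply: h; apply: (Sw_cover (sMf f) (aMf f)).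
have ginj : injective g.
  move=> f1 f2 e.
  have [W1 [e1 v1]] := gW f1; have [W2 [e2 v2]] := gW f2.
  move: e; rewrite e1 e2 => -[e]; subst W2.
  apply/ffunP => j; apply: val_inj.
  rewrite -!nMf.
  rewrite -(Sw_witness (sMf f1) (aMf f1) v1 (ltn_ord j)).
  by rewrite (Sw_witness (sMf f2) (aMf f2) v2 (ltn_ord j)).
have hcount : k ^ L <= 3 ^ depth T.
  apply: leq_trans (size_leaves T).
  have -> : k ^ L = size (map g (enum FT)).
    by rewrite size_map -cardE card_ffun !card_ord.
  apply: uniq_leq_size; first by rewrite map_inj_uniq ?enum_uniq.
  by move=> o /mapP [f _ ->]; apply: eval_in_leaves.
have h2 : (t - 2) * L <= 2 * depth T.
  rewrite -(leq_exp2l _ _ (erefl : 1 < 2)).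
  rewrite (expnM 2 (t - 2) L) -/k (expnM 2 2 (depth T)).
  apply: (leq_trans hcount). elim: (depth T) => // d IH; rewrite !expnS leq_mul //.
have hL : n <= 2 * L by rewrite /L; lia.
nia.
Qed.
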